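(* Let $C$ be a linear completely regular $[n,k,2]_q$ code with covering radius $\rho=1$ and $k<n-1$, let $n_a$ be the number of codewords at distance one from any vector not in $C$, and let $X_1,\dots,X_{n/n_a}$ be a partition of $\{1,\dots,n\}$ into sets of size $n_a$ such that every weight-2 codeword of $C$ has support contained in one of the $X_j$. Let ${\bf x}=(x_1,\dots,x_n)\in C$ and let $X_j$ be one of these sets with $\mathrm{supp}({\bf x})\cap X_j\neq\emptyset$. Then there exists a codeword ${\bf x}'\in C$ which coincides with ${\bf x}$ in all positions outside $X_j$ and satisfies $|\mathrm{supp}({\bf x}')\cap X_j|\le 1$; moreover, in the case where such an ${\bf x}'$ has $|\mathrm{supp}({\bf x}')\cap X_j|=1$, for every position $i\in X_j$ there is such a codeword ${\bf x}'$ with $\mathrm{supp}({\bf x}')\cap X_j=\{i\}$.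
   Context: Hamming distance; $\mathrm{supp}({\bf v})$ is the set of nonzero coordinates of ${\bf v}$; covering radius $\rho=\max_{\bf v}\min_{{\bf x}\in C}d({\bf v},{\bf x})$. $C$ is completely regular if for every vector ${\bf x}$, with $t=d({\bf x},C)$, the number of codewords at distance $i$ from ${\bf x}$ depends only on $t$ and $i$. *)

(* Defs.v *)
From HB Require Import structures.
From mathcomp Require Import all_boot all_order all_algebra.
Set Implicit Arguments. Unset Strict Implicit. Unset Printing Implicit Defensive.
Import GRing.Theory.
Local Open Scope ring_scope.

Section Codes.
Variables (F : finFieldType) (n : nat).

Definition supp (v : 'rV[F]_n) : {set 'I_n} := [set i | v 0 i != 0].

Definition wt (v : 'rV[F]_n) : nat := #|supp v|.
Definition hdist (u v : 'rV[F]_n) : nat := wt (u - v).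

(* distance from a vector to a code (C contains 0, so the min is over a nonempty set;
   every distance is <= n, so n is a neutral starting value) *)
Definition dist_to (C : {vspace 'rV[F]_n}) (x : 'rV[F]_n) : nat :=
  \big[minn/n]_(c : 'rV[F]_n | c \in C) hdist x c.

Definition covering_radius (C : {vspace 'rV[F]_n}) : nat :=
  \max_(v : 'rV[F]_n) dist_to C v.

Definition min_dist_eq (C : {vspace 'rV[F]_n}) (d : nat) : Prop :=
  (exists2 c, c \in C & (c != 0) /\ wt c = d) /\
  (forall c, c \in C -> c != 0 -> (d <= wt c)%N).

Definition nb_at (C : {vspace 'rV[F]_n}) (x : 'rV[F]_n) (i : nat) : nat :=
  #|[set c : 'rV[F]_n | (c \in C) && (hdist x c == i)]|.

Definition completely_regular (C : {vspace 'rV[F]_n}) : Prop :=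
  forall x y : 'rV[F]_n, dist_to C x = dist_to C y ->
    forall i, nb_at C x i = nb_at C y i.

End Codes.

(* Main.v *)
Require Import Defs.
From HB Require Import structures.
From mathcomp Require Import all_boot all_order all_algebra.
Import GRing.Theory.
Local Open Scope ring_scope.

Lemma suppE (F : finFieldType) n (v : 'rV[F]_n) k : (k \in supp v) = (v 0 k != 0).
Proof. by rewrite /supp inE. Qed.

Lemma entryBZ (F : finFieldType) n (y c : 'rV[F]_n) a k :
  (y - a *: c) 0 k = y 0 k - a * c 0 k.
Proof. by rewrite !mxE. Qed.

Lemma wt1_C {F : finFieldType} {n} {C : {vspace 'rV[F]_n}} (Hmd : min_dist_eq C 2)
  j c : c \in C -> (forall k, k != j -> c 0 k = 0) -> c = 0.
Proof.
move=> cC H; apply/eqP; apply/negPn/negP => c0.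
have := Hmd.2 c cC c0; rewrite /wt.
have sub : supp c \subset [set j].
  apply/subsetP => k; rewrite suppE in_set1; apply: contraNT => kj.
  by rewrite H.
by have := subset_leq_card sub; rewrite cards1 => h1 h2; have := leq_trans h2 h1.
Qed.

Lemma key {F : finFieldType} {n na : nat} {C : {vspace 'rV[F]_n}}
  {P : {set {set 'I_n}}}
  (Hmd : min_dist_eq C 2)
  (Hna : forall v : 'rV[F]_n, v \notin C -> nb_at C v 1 = na)
  (Hpart : partition P [set: 'I_n])
  (Hsize : forall X, X \in P -> #|X| = na)
  (Hw2 : forall c, c \in C -> wt c = 2%N -> exists2 X, X \in P & supp c \subset X)
  {X} (HX : X \in P) i j (Hi : i \in X) (Hj : j \in X) (Hij : i != j) :
  exists2 c, c \in C &
    [/\ c 0 i = 1, c 0 j != 0 & forall k, k != i -> k != j -> c 0 k = 0].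
Proof.
set e : 'rV[F]_n := delta_mx 0 i.
have eE k : e 0 k = (k == i)%:R by rewrite /e mxE eqxx /= eq_sym.
have eC : e \notin C.
  apply/negP => eC.
  have h0 : forall k, k != i -> e 0 k = 0 by move=> k kn; rewrite eE (negbTE kn).
  have h : e = 0 := wt1_C Hmd i _ eC h0.
  by have := eE i; rewrite h eqxx mxE => /eqP; rewrite eq_sym oner_eq0.
set S := [set c | (c \in C) && (hdist e c == 1%N)].
have cardS : #|S| = na by rewrite -(Hna e eC).
have Ec (c : 'rV[F]_n) k : c 0 k = e 0 k - (e - c) 0 k.
  by rewrite [(e - c) 0 k]mxE [(- c) 0 k]mxE opprD addrA subrr add0r opprK.
set g := fun c : 'rV[F]_n => odflt i [pick k in supp (e - c)].
have gP : forall c, c \in S -> supp (e - c) = [set g c].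
  move=> c; rewrite inE => /andP [_ /eqP]; rewrite /hdist /wt => /eqP/cards1P [j0 Hj0].
  rewrite Hj0 /g; case: pickP => [k|H]; first by rewrite Hj0 in_set1 => /eqP ->.
  by have := H j0; rewrite Hj0 in_set1 eqxx.
have ginj : {in S &, injective g}.
  move=> c c' cS c'S gcc'.
  have d0 : c' - c = 0.
    apply: (wt1_C Hmd (g c) _).
      by apply: memvB; [move: c'S | move: cS]; rewrite inE => /andP [].
    move=> k kn.
    have h1 : (e - c) 0 k = 0.
      by apply/eqP; apply: contraNT kn; rewrite -suppE gP // in_set1.
    have h2 : (e - c') 0 k = 0.
      by apply/eqP; apply: contraNT kn; rewrite -suppE gP // gcc' in_set1.
    by rewrite [_ 0 k]mxE [(- c) 0 k]mxE (Ec c' k) (Ec c k) h1 h2 !subr0 subrr.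
  by apply/esym/eqP; rewrite -subr_eq0 d0.
have gX : forall c, c \in S -> g c \in X.
  move=> c cS; have [->|gi] := eqVneq (g c) i; first by [].
  have cC : c \in C by move: cS; rewrite inE => /andP [].
  have supc : supp c = [set i; g c].
    apply/setP => k; rewrite suppE !inE Ec eE.
    have [->|ki] := eqVneq k i.
      have : i \notin supp (e - c) by rewrite gP // in_set1 eq_sym.
      by rewrite suppE negbK => /eqP ->; rewrite subr0 oner_eq0.
    rewrite sub0r oppr_eq0 -suppE gP // in_set1 //.
  have w2 : wt c = 2%N by rewrite /wt supc cards2 eq_sym gi.
  have [Y YP sY] := Hw2 c cC w2.
  have iY : i \in Y by apply: (subsetP sY); rewrite supc !inE eqxx.
  have gY : g c \in Y by apply: (subsetP sY); rewrite supc !inE eqxx orbT.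
  have [->//|XY] := eqVneq X Y.
  move: Hpart => /and3P [_ /trivIsetP tP _].
  have := tP X Y HX YP XY; move/disjoint_setI0/setP/(_ i).
  by rewrite !inE Hi iY.
have imS : g @: S = X.
  apply/eqP; rewrite eqEcard; apply/andP; split.
    by apply/subsetP => k /imsetP [c cS ->]; apply: gX.
  by rewrite card_in_imset // cardS Hsize.
have : j \in g @: S by rewrite imS.
move=> /imsetP [c cS jc].
have cC : c \in C by move: cS; rewrite inE => /andP [].
have sP := gP c cS; rewrite -jc in sP.
have ec k : ((e - c) 0 k != 0) = (k == j) by rewrite -suppE sP in_set1.
exists c => //; split.
- rewrite Ec eE eqxx.
  by have := ec i; rewrite (negbTE Hij) => /negbFE/eqP ->; rewrite subr0.
- by rewrite Ec eE [j == i]eq_sym (negbTE Hij) sub0r oppr_eq0 ec.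
- move=> k ki kj; rewrite Ec eE (negbTE ki).
  by have := ec k; rewrite (negbTE kj) => /negbFE/eqP ->; rewrite subr0.
Qed.

Theorem lemma3p8 (F : finFieldType) (n k na : nat) (C : {vspace 'rV[F]_n})
  (P : {set {set 'I_n}})
  (Hdim : \dim C = k)
  (Hmd : min_dist_eq C 2)
  (Hcr : completely_regular C)
  (Hrho : covering_radius C = 1%N)
  (Hk : (k < n.-1)%N)
  (Hna : forall v : 'rV[F]_n, v \notin C -> nb_at C v 1 = na)
  (Hpart : partition P [set: 'I_n])
  (Hsize : forall X, X \in P -> #|X| = na)
  (Hw2 : forall c, c \in C -> wt c = 2%N -> exists2 X, X \in P & supp c \subset X)
  (x : 'rV[F]_n) (Hx : x \in C) (X : {set 'I_n}) (HX : X \in P)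
  (Hmeet : supp x :&: X != set0) :
  (exists2 x' : 'rV[F]_n, x' \in C &
     (forall i, i \notin X -> x' 0 i = x 0 i) /\ (#|supp x' :&: X| <= 1)%N) /\
  ((exists2 x' : 'rV[F]_n, x' \in C &
     (forall i, i \notin X -> x' 0 i = x 0 i) /\ #|supp x' :&: X| = 1%N) ->
   forall i, i \in X ->
     exists2 x' : 'rV[F]_n, x' \in C &
       (forall j, j \notin X -> x' 0 j = x 0 j) /\ supp x' :&: X = [set i]).
Proof.
have K := key Hmd Hna Hpart Hsize Hw2 HX.
split.
  suff: forall m y, y \in C -> (forall i, i \notin X -> y 0 i = x 0 i) ->
      (#|supp y :&: X| <= m)%N ->
      exists2 x' : 'rV[F]_n, x' \in C &
        (forall i, i \notin X -> x' 0 i = x 0 i) /\ (#|supp x' :&: X| <= 1)%N.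
    by move=> /(_ _ x Hx (fun _ _ => erefl) (leqnn _)).
  elim=> [|m IH] y yC yx ym.
    by exists y => //; split => //; apply: leq_trans ym _.
  have [le1|] := leqP #|supp y :&: X| 1; first by exists y.
  move=> /card_gt1P [i [j [iA jA ij]]].
  move: (iA) (jA); rewrite !inE => /andP [iy iX] /andP [jy jX].
  have [c cC [ci cj ck]] := K i j iX jX ij.
  apply: (IH (y - y 0 i *: c)).
  - by apply: memvB => //; apply: memvZ.
  - move=> l lX; rewrite entryBZ ck ?mulr0 ?subr0 ?yx //.
      by apply: contraNneq lX => ->.
    by apply: contraNneq lX => ->.
  - have sub : supp (y - y 0 i *: c) :&: X \subset (supp y :&: X) :\ i.
      apply/subsetP => l; rewrite !inE ?suppE entryBZ => /andP [h lX].
      rewrite lX andbT; move: h.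
      have [->|li] := eqVneq l i; first by rewrite ci mulr1 subrr eqxx.
      have [->|lj] := eqVneq l j; first by rewrite jy.
      by rewrite ck // mulr0 subr0.
    move: (subset_leq_card sub); rewrite (cardsD1 i (supp y :&: X)) iA add1n in ym.
    by move=> h; apply: leq_trans h _.
move=> [x' x'C [x'x /eqP/cards1P [i0 Hi0]]] i iX.
have i0A : i0 \in supp x' :&: X by rewrite Hi0 in_set1.
move: (i0A); rewrite inE ?suppE => /andP [x'i0 i0X].
have [<-|i0i] := eqVneq i0 i; first by exists x'.
have [c cC [ci cj ck]] := K i0 i i0X iX i0i.
have x'0 l : l \in X -> l != i0 -> x' 0 l = 0.
  move=> lX li0; apply/eqP; apply: contraNT li0 => h.
  by rewrite -in_set1 -Hi0 inE ?suppE h.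
exists (x' - x' 0 i0 *: c).
  by apply: memvB => //; apply: memvZ.
split.
  move=> l lX; rewrite entryBZ ck ?mulr0 ?subr0 ?x'x //.
    by apply: contraNneq lX => ->.
  by apply: contraNneq lX => ->.
apply/setP => l; rewrite !inE ?suppE entryBZ.
have [lX|lX] := boolP (l \in X); last first.
  by rewrite andbF; apply/esym; apply: contraNF lX => /eqP ->.
rewrite andbT.
have [->|li] := eqVneq l i.
  have ii0 : i != i0 by rewrite eq_sym.
  by rewrite (x'0 i iX ii0) sub0r oppr_eq0 mulf_neq0.
have [->|li0] := eqVneq l i0; first by rewrite ci mulr1 subrr eqxx.
by rewrite x'0 // ck // mulr0 subr0 eqxx.
Qed.
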